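(* Fix $0<d<1$ and let $c(x)=x^d$. For any game with $n$ jobs and cost function $c$, any Nash equilibrium $s$ and any optimal assignment $s^*$, we have $\frac{C(s)}{C(s^* )}=O\!\left(n^{\frac{1-d}{2}}\right)$.
   Context: A game is specified by a cost function $c$ (here $c(x)=x^d$, $c(0)=0$), a time horizon $T$ with slots $t=1,\dots,T$, and a set of $n$ jobs, each job $j$ having integer release time $r_j$ and integer deadline $d_j$ with $0<r_j<d_j<T$. An assignment $s$ gives each job $j$ a slot $s_j$ with $r_j\le s_j<d_j$. The load of slot $t$ is $l_t(s)=|\{j:s_j=t\}|$ and $C(s)=\sum_{t=1}^T c(l_t(s))$. An assignment $s$ is a Nash equilibrium if for every job $j$ and every slot $t\neq s_j$ with $r_j\le t<d_j$: $\frac{c(l_{s_j}(s))}{l_{s_j}(s)}\le\frac{c(l_t(s)+1)}{l_t(s)+1}$. An optimal assignment is one minimizing $C$ over all assignments. *)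

(* Defs.v *)
(* concrete reals R, jobs indexed 0..n-1, slots 1..T. *)
From Stdlib Require Import Reals Lra Lia List Arith.
Import ListNotations.
Open Scope R_scope.

Definition cost (d : R) (x : nat) : R :=
  match x with
  | O => 0
  | _ => Rpower (INR x) d
  end.

Definition valid_game (T n : nat) (r dl : nat -> nat) : Prop :=
  forall j, (j < n)%nat -> (0 < r j)%nat /\ (r j < dl j)%nat /\ (dl j < T)%nat.

Definition assignment (n : nat) (r dl : nat -> nat) (s : nat -> nat) : Prop :=
  forall j, (j < n)%nat -> (r j <= s j)%nat /\ (s j < dl j)%nat.

Definition load (n : nat) (s : nat -> nat) (t : nat) : nat :=
  length (filter (fun j => Nat.eqb (s j) t) (seq 0 n)).

Definition total_cost (d : R) (T n : nat) (s : nat -> nat) : R :=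
  fold_right Rplus 0 (map (fun t => cost d (load n s t)) (seq 1 T)).

Definition nash_eq (d : R) (n : nat) (r dl : nat -> nat) (s : nat -> nat) : Prop :=
  assignment n r dl s /\
  forall j t, (j < n)%nat -> t <> s j -> (r j <= t)%nat -> (t < dl j)%nat ->
    cost d (load n s (s j)) / INR (load n s (s j))
      <= cost d (load n s t + 1) / INR (load n s t + 1).

Definition optimal (d : R) (T n : nat) (r dl : nat -> nat) (s : nat -> nat) : Prop :=
  assignment n r dl s /\
  forall s', assignment n r dl s' -> total_cost d T n s <= total_cost d T n s'.

(* Main.v *)
Require Import Defs.
From Stdlib Require Import Reals Lra Lia List Arith Bool.
Import ListNotations.
Open Scope R_scope.
Open Scope bool_scope.

Definition sumR (f : nat -> R) (L : list nat) : R := fold_right Rplus 0 (map f L).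

Lemma sumR_nil f : sumR f [] = 0. Proof. reflexivity. Qed.
Lemma sumR_cons f a L : sumR f (a :: L) = f a + sumR f L. Proof. reflexivity. Qed.

Lemma sumR_le f g L : (forall x, In x L -> f x <= g x) -> sumR f L <= sumR g L.
Proof.
  induction L as [|a L IH]; intros H; rewrite ?sumR_nil, ?sumR_cons; [lra|].
  assert (f a <= g a) by (apply H; left; auto).
  assert (sumR f L <= sumR g L) by (apply IH; intros; apply H; right; auto). lra.
Qed.

Lemma sumR_ext f g L : (forall x, In x L -> f x = g x) -> sumR f L = sumR g L.
Proof.
  intros H; apply Rle_antisym; apply sumR_le; intros x Hx; rewrite H; auto; lra.
Qed.

Lemma sumR_plus f g L : sumR (fun x => f x + g x) L = sumR f L + sumR g L.
Proof. induction L; rewrite ?sumR_nil, ?sumR_cons; [lra|]. rewrite IHL; lra. Qed.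

Lemma sumR_mult_l c f L : sumR (fun x => c * f x) L = c * sumR f L.
Proof. induction L; rewrite ?sumR_nil, ?sumR_cons; [lra|]. rewrite IHL; lra. Qed.

Lemma sumR_zero f L : (forall x, In x L -> f x = 0) -> sumR f L = 0.
Proof.
  induction L as [|a L IH]; intros H; rewrite ?sumR_nil, ?sumR_cons; [lra|].
  rewrite H by (left; auto). rewrite IH by (intros; apply H; right; auto). lra.
Qed.

Lemma sumR_swap (F : nat -> nat -> R) L1 L2 :
  sumR (fun a => sumR (fun b => F a b) L2) L1 = sumR (fun b => sumR (fun a => F a b) L1) L2.
Proof.
  induction L1 as [|a L1 IH]; rewrite ?sumR_nil, ?sumR_cons.
  - symmetry; apply sumR_zero; intros; reflexivity.
  - rewrite IH. rewrite <- sumR_plus. apply sumR_ext. intros; rewrite sumR_cons; reflexivity.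
Qed.

Lemma sumR_delta g L x : NoDup L -> In x L ->
  sumR (fun t => if Nat.eqb x t then g t else 0) L = g x.
Proof.
  induction L as [|a L IH]; intros HN Hx; [destruct Hx|].
  inversion HN; subst. rewrite sumR_cons.
  destruct (Nat.eqb_spec x a).
  - subst. rewrite sumR_zero. lra.
    intros y Hy. destruct (Nat.eqb_spec a y); subst; [contradiction|reflexivity].
  - destruct Hx as [Hx|Hx]; [congruence|]. rewrite IH; auto; lra.
Qed.

Lemma sumR_if_const (P : nat -> bool) c L :
  sumR (fun x => if P x then c else 0) L = INR (length (filter P L)) * c.
Proof.
  induction L as [|a L IH]; rewrite ?sumR_nil, ?sumR_cons; simpl; [lra|].
  destruct (P a); simpl length; rewrite IH; try rewrite S_INR; lra.
Qed.

Lemma sumR_nonneg f L : (forall x, In x L -> 0 <= f x) -> 0 <= sumR f L.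
Proof.
  intros H. rewrite <- (sumR_zero (fun _ => 0) L) by auto. apply sumR_le; auto.
Qed.

Lemma regroup (F : nat -> R) (g : nat -> nat) L1 L2 :
  NoDup L2 -> (forall j, In j L1 -> In (g j) L2) ->
  sumR F L1 = sumR (fun u => sumR (fun j => if Nat.eqb (g j) u then F j else 0) L1) L2.
Proof.
  intros HN Hg. rewrite (sumR_swap (fun u j => if Nat.eqb (g j) u then F j else 0)).
  apply sumR_ext. intros j Hj. rewrite (sumR_delta (fun _ => F j)); auto.
Qed.

Lemma length_filter_mono {A} (P Q : A -> bool) L :
  (forall x, Q x = true -> P x = true) -> (length (filter Q L) <= length (filter P L))%nat.
Proof.
  intros H; induction L as [|a L IH]; simpl; [lia|].
  destruct (Q a) eqn:E. rewrite (H a E). simpl; lia.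
  destruct (P a); simpl; lia.
Qed.

Lemma length_filter_split {A} (P Q : A -> bool) L :
  length (filter P L) = (length (filter (fun x => P x && Q x) L) + length (filter (fun x => P x && negb (Q x)) L))%nat.
Proof.
  induction L as [|a L IH]; simpl; [lia|].
  destruct (P a), (Q a); simpl; lia.
Qed.
Lemma exp_le' a b : a <= b -> exp a <= exp b.
Proof. intros [H|H]; [left; apply exp_increasing; auto| subst; lra]. Qed.

Lemma ln_le' x y : 0 < x -> x <= y -> ln x <= ln y.
Proof. intros H [H1|H1]; [left; apply ln_increasing; auto| subst; lra]. Qed.

Lemma INR_pos1 k : (1 <= k)%nat -> 0 < INR k.
Proof. intros; apply lt_0_INR; lia. Qed.

Lemma cost_S d k : (1 <= k)%nat -> cost d k = Rpower (INR k) d.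
Proof. intros H; destruct k; [lia|reflexivity]. Qed.

Lemma w_eq d k : (1 <= k)%nat -> cost d k / INR k = Rpower (INR k) (d-1).
Proof.
  intros H. rewrite cost_S by auto. pose proof (INR_pos1 k H).
  replace (d - 1) with (d + - (1)) by ring. rewrite Rpower_plus, Rpower_Ropp, Rpower_1 by auto.
  reflexivity.
Qed.

Lemma w_strict d a b : d < 1 -> (1 <= a)%nat -> (a < b)%nat ->
  Rpower (INR b) (d-1) < Rpower (INR a) (d-1).
Proof.
  intros Hd Ha Hb. unfold Rpower. apply exp_increasing.
  assert (ln (INR a) < ln (INR b)).
  { apply ln_increasing. apply INR_pos1; auto. apply lt_INR; auto. }
  nra.
Qed.

Lemma good_bound d l m : d < 1 -> (1 <= l)%nat -> (1 <= m)%nat -> (m <= l * l)%nat ->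
  Rpower (INR l) (d-1) <= Rpower (INR m) ((d-1)/2).
Proof.
  intros Hd Hl Hm Hml. unfold Rpower. apply exp_le'.
  assert (ln (INR m) <= ln (INR l) + ln (INR l)).
  { rewrite <- ln_mult by (apply INR_pos1; auto). apply ln_le'. apply INR_pos1; auto.
    rewrite <- mult_INR. apply le_INR; auto. }
  nra.
Qed.

Lemma bad_bound d l m : 0 < d -> (1 <= l)%nat -> (l * l < m)%nat ->
  Rpower (INR l) d <= Rpower (INR m) (d/2).
Proof.
  intros Hd Hl Hml. unfold Rpower. apply exp_le'.
  assert (ln (INR l) + ln (INR l) <= ln (INR m)).
  { rewrite <- ln_mult by (apply INR_pos1; auto). apply ln_le'.
    rewrite <- mult_INR. apply INR_pos1; nia. 
    rewrite <- mult_INR. apply le_INR; lia. }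
  nra.
Qed.

Lemma half_split d m : (1 <= m)%nat ->
  Rpower (INR m) (d/2) = sqrt (INR m) * Rpower (INR m) ((d-1)/2).
Proof.
  intros H. pose proof (INR_pos1 m H). rewrite <- Rpower_sqrt by auto.
  rewrite <- Rpower_plus. f_equal. field.
Qed.

Lemma full_split d m : (1 <= m)%nat ->
  INR m * Rpower (INR m) ((d-1)/2) = Rpower (INR m) d * Rpower (INR m) ((1-d)/2).
Proof.
  intros H. pose proof (INR_pos1 m H). rewrite <- Rpower_plus.
  rewrite <- (Rpower_1 (INR m)) at 1 by auto. rewrite <- Rpower_plus. f_equal. field.
Qed.

Lemma Rpower_pos x a : 0 < Rpower x a.
Proof. unfold Rpower; apply exp_pos. Qed.

Lemma filter_ge1 {A} (P : A -> bool) L x : In x L -> P x = true -> (1 <= length (filter P L))%nat.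
Proof.
  intros H1 H2. assert (Hi : In x (filter P L)) by (apply filter_In; auto).
  destruct (filter P L); [destruct Hi|simpl; lia].
Qed.

Lemma load_ge1 n s j : (j < n)%nat -> (1 <= load n s (s j))%nat.
Proof.
  intros Hj. unfold load. apply (filter_ge1 _ _ j). apply in_seq; lia. apply Nat.eqb_refl.
Qed.

Lemma load_le n s t : (load n s t <= n)%nat.
Proof. unfold load. rewrite <- (length_seq n 0) at 2. apply filter_length_le. Qed.

Lemma nash_lt d n r dl s j t : d < 1 -> nash_eq d n r dl s -> (j < n)%nat -> t <> s j ->
  (r j <= t)%nat -> (t < dl j)%nat -> (load n s t < load n s (s j))%nat.
Proof.
  intros Hd [_ HN] Hj Ht Hr Hdl. pose proof (HN j t Hj Ht Hr Hdl) as H.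
  pose proof (load_ge1 n s j Hj).
  destruct (Nat.lt_ge_cases (load n s t) (load n s (s j))) as [|Hge]; auto.
  exfalso. rewrite !w_eq in H by lia.
  pose proof (w_strict d (load n s (s j)) (load n s t + 1) Hd ltac:(lia) ltac:(lia)). lra.
Qed.

Lemma host_ex n s sopt t u :
  (1 <= length (filter (fun j => (s j =? t)%nat && (sopt j =? u)%nat) (seq 0 n)))%nat ->
  exists j, (j < n)%nat /\ s j = t /\ sopt j = u.
Proof.
  intros H. destruct (filter (fun j => (s j =? t)%nat && (sopt j =? u)%nat) (seq 0 n)) eqn:E;
    [simpl in H; lia|].
  assert (Hi : In n0 (n0 :: l)) by (left; auto). rewrite <- E in Hi.
  apply filter_In in Hi as [H1 H2]. apply in_seq in H1. apply andb_true_iff in H2 as [H2 H3].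
  apply Nat.eqb_eq in H2, H3. exists n0; split; [lia|auto].
Qed.

Lemma inj_count (L : list nat) (f : nat -> nat) m :
  NoDup L -> (forall x, In x L -> (1 <= f x)%nat /\ (f x * f x < m)%nat) ->
  (forall x y, In x L -> In y L -> (x < y)%nat -> f x <> f y) ->
  (length L <= Nat.sqrt m)%nat.
Proof.
  intros HN Hf Hi. rewrite <- (length_map f L). rewrite <- (length_seq (Nat.sqrt m) 1).
  apply NoDup_incl_length.
  - apply NoDup_map_NoDup_ForallPairs; auto. intros a b Ha Hb Hab.
    destruct (lt_eq_lt_dec a b) as [[H|H]|H]; auto.
    + exfalso; apply (Hi a b); auto.
    + exfalso; apply (Hi b a); auto.
  - intros k Hk. apply in_map_iff in Hk as [x [<- Hx]]. apply in_seq.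
    destruct (Hf x Hx). assert (f x <= Nat.sqrt m)%nat by (apply Nat.sqrt_le_square; lia). lia.
Qed.

Lemma le1_count (L : list nat) u : NoDup L -> (forall x, In x L -> x = u) -> (length L <= 1)%nat.
Proof.
  intros HN H. change 1%nat with (length [u]). apply NoDup_incl_length; auto.
  intros x Hx. rewrite (H x Hx). left; auto.
Qed.

Definition cnt n (s sopt : nat -> nat) t u := length (filter (fun j => (s j =? t)%nat && (sopt j =? u)%nat) (seq 0 n)).
Definition isbad n s m t := Nat.ltb (load n s t * load n s t) m.
Definition ishost n s sopt u t := Nat.leb 1 (cnt n s sopt t u).

Lemma elem_facts n s sopt m u x : ishost n s sopt u x = true -> isbad n s m x = true ->
  exists j, (j < n)%nat /\ s j = x /\ sopt j = u /\ (1 <= load n s x)%nat /\ (load n s x * load n s x < m)%nat.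
Proof.
  unfold ishost, isbad; intros H1 H2. apply Nat.leb_le in H1. apply Nat.ltb_lt in H2.
  destruct (host_ex n s sopt x u H1) as [j [Hj [E1 E2]]]. exists j; repeat split; auto.
  subst; apply load_ge1; auto.
Qed.

Lemma count_bound d T n r dl s sopt u m : d < 1 -> nash_eq d n r dl s -> assignment n r dl sopt ->
  (length (filter (fun t => isbad n s m t && ishost n s sopt u t) (seq 1 T)) <= 2 * Nat.sqrt m + 1)%nat.
Proof.
  intros Hd HN HA.
  rewrite (length_filter_split _ (fun t => Nat.ltb t u)).
  rewrite (length_filter_split (fun x => (isbad n s m x && ishost n s sopt u x) && negb (Nat.ltb x u)) (fun t => Nat.eqb t u)).
  assert (HNs := proj1 HN).
  assert (L1 : (length (filter (fun x => (isbad n s m x && ishost n s sopt u x) && (x <? u)%nat) (seq 1 T)) <= Nat.sqrt m)%nat).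
  { apply (inj_count _ (load n s)). apply NoDup_filter, seq_NoDup.
    - intros x Hx. apply filter_In in Hx as [_ Hx].
      apply andb_true_iff in Hx as [Hx _]. apply andb_true_iff in Hx as [Hb Hh].
      destruct (elem_facts n s sopt m u x Hh Hb) as [j [? [? [? [? ?]]]]]; auto.
    - intros x y Hx Hy Hxy. apply filter_In in Hx as [_ Hx]. apply filter_In in Hy as [_ Hy].
      apply andb_true_iff in Hx as [Hx _]. apply andb_true_iff in Hx as [Hb Hh].
      apply andb_true_iff in Hy as [_ Hyu]. apply Nat.ltb_lt in Hyu.
      destruct (elem_facts n s sopt m u x Hh Hb) as [j [Hj [Ej [Eu _]]]].
      destruct (HNs j Hj). destruct (HA j Hj).
      assert (load n s y < load n s (s j))%nat.
      { apply (nash_lt d n r dl s j y); auto; lia. }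
      rewrite Ej in H3. lia. }
  assert (L3 : (length (filter (fun x => ((isbad n s m x && ishost n s sopt u x) && negb (x <? u)%nat) && negb (x =? u)%nat) (seq 1 T)) <= Nat.sqrt m)%nat).
  { apply (inj_count _ (load n s)). apply NoDup_filter, seq_NoDup.
    - intros x Hx. apply filter_In in Hx as [_ Hx].
      apply andb_true_iff in Hx as [Hx _]. apply andb_true_iff in Hx as [Hx _]. apply andb_true_iff in Hx as [Hb Hh].
      destruct (elem_facts n s sopt m u x Hh Hb) as [j [? [? [? [? ?]]]]]; auto.
    - intros x y Hx Hy Hxy. apply filter_In in Hx as [_ Hx]. apply filter_In in Hy as [_ Hy].
      apply andb_true_iff in Hx as [Hx Hxu2]. apply andb_true_iff in Hx as [_ Hxu].
      apply negb_true_iff in Hxu, Hxu2. apply Nat.ltb_ge in Hxu. apply Nat.eqb_neq in Hxu2.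
      apply andb_true_iff in Hy as [Hy _]. apply andb_true_iff in Hy as [Hy _]. apply andb_true_iff in Hy as [Hb Hh].
      destruct (elem_facts n s sopt m u y Hh Hb) as [j [Hj [Ej [Eu _]]]].
      destruct (HNs j Hj). destruct (HA j Hj).
      assert (load n s x < load n s (s j))%nat.
      { apply (nash_lt d n r dl s j x); auto; lia. }
      rewrite Ej in H3. lia. }
  assert (L2 : (length (filter (fun x => ((isbad n s m x && ishost n s sopt u x) && negb (x <? u)%nat) && (x =? u)%nat) (seq 1 T)) <= 1)%nat).
  { apply (le1_count _ u). apply NoDup_filter, seq_NoDup.
    intros x Hx. apply filter_In in Hx as [_ Hx]. apply andb_true_iff in Hx as [_ Hx].
    apply Nat.eqb_eq; auto. }
  lia.
Qed.

Lemma slot_in T n r dl f j : valid_game T n r dl -> assignment n r dl f -> (j < n)%nat -> In (f j) (seq 1 T).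
Proof.
  intros HV HA Hj. destruct (HV j Hj) as [? [? ?]]. destruct (HA j Hj). apply in_seq. lia.
Qed.

Lemma sqrt_nat_le m : INR (Nat.sqrt m) <= sqrt (INR m).
Proof.
  rewrite <- (sqrt_square (INR (Nat.sqrt m))) by apply pos_INR.
  apply sqrt_le_1_alt. rewrite <- mult_INR. apply le_INR. apply Nat.sqrt_spec. lia.
Qed.

Lemma per_u d T n r dl s sopt u : 0 < d -> d < 1 -> valid_game T n r dl -> nash_eq d n r dl s -> assignment n r dl sopt ->
  sumR (fun j => if (sopt j =? u)%nat then cost d (load n s (s j)) / INR (load n s (s j)) else 0) (seq 0 n)
  <= 4 * INR (load n sopt u) * Rpower (INR (load n sopt u)) ((d-1)/2).
Proof.
  intros Hd0 Hd1 HV HN HA.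
  set (m := load n sopt u). set (q := Rpower (INR m) ((d-1)/2)).
  assert (Hq : 0 < q) by apply Rpower_pos.
  destruct (Nat.eq_dec m 0) as [Hm0|Hm].
  - rewrite sumR_zero. rewrite Hm0; simpl; lra.
    intros j Hj. destruct (Nat.eqb_spec (sopt j) u); auto.
    exfalso. assert (1 <= m)%nat; [|lia]. unfold m, load. apply (filter_ge1 _ _ j); auto.
    apply Nat.eqb_eq; auto.
  - assert (Hm1 : (1 <= m)%nat) by lia.
    assert (HNs := proj1 HN).
    set (w := fun j => cost d (load n s (s j)) / INR (load n s (s j))).
    apply Rle_trans with (sumR (fun j => (if (sopt j =? u)%nat then q else 0) +
       (if (sopt j =? u)%nat then (if isbad n s m (s j) then w j else 0) else 0)) (seq 0 n)).
    { apply sumR_le. intros j Hj. apply in_seq in Hj.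
      destruct (sopt j =? u)%nat; [|lra].
      pose proof (load_ge1 n s j ltac:(lia)).
      assert (Hw : w j = Rpower (INR (load n s (s j))) (d-1)) by (unfold w; apply w_eq; auto).
      destruct (isbad n s m (s j)) eqn:Eb.
      - simpl. unfold w. rewrite w_eq by auto. pose proof (Rpower_pos (INR (load n s (s j))) (d-1)). lra.
      - unfold isbad in Eb. apply Nat.ltb_ge in Eb. simpl. unfold w. rewrite w_eq by auto.
        pose proof (good_bound d _ m Hd1 H Hm1 Eb). fold q in H0. simpl. idtac. lra. }
    rewrite sumR_plus, sumR_if_const.
    change (length (filter (fun j => (sopt j =? u)%nat) (seq 0 n))) with m.
    assert (Bad : sumR (fun j => if (sopt j =? u)%nat then (if isbad n s m (s j) then w j else 0) else 0) (seq 0 n)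
                  <= 3 * INR m * q).
    { rewrite (regroup _ s (seq 0 n) (seq 1 T)); [| apply seq_NoDup |].
      2:{ intros j Hj. apply in_seq in Hj. apply (slot_in T n r dl s); auto; lia. }
      apply Rle_trans with (sumR (fun t => if isbad n s m t && ishost n s sopt u t then Rpower (INR m) (d/2) else 0) (seq 1 T)).
      { apply sumR_le. intros t Ht.
        rewrite (sumR_ext _ (fun j => if (s j =? t)%nat && (sopt j =? u)%nat then
                   (if isbad n s m t then cost d (load n s t) / INR (load n s t) else 0) else 0)).
        2:{ intros j Hj. destruct (Nat.eqb_spec (s j) t); simpl; [subst; reflexivity|reflexivity]. }
        rewrite sumR_if_const. fold (cnt n s sopt t u).
        pose proof (Rpower_pos (INR m) (d/2)).
        destruct (Nat.eq_dec (cnt n s sopt t u) 0) as [Hc|Hc].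
        { rewrite Hc. simpl INR. destruct (_ && _); lra. }
        assert (Hh : ishost n s sopt u t = true) by (apply Nat.leb_le; lia).
        rewrite Hh. destruct (isbad n s m t) eqn:Eb; [|simpl; lra]. simpl.
        assert (Hcl : (cnt n s sopt t u <= load n s t)%nat).
        { unfold cnt, load. apply length_filter_mono. intros j Hj. apply andb_true_iff in Hj; tauto. }
        assert (Hl : (1 <= load n s t)%nat) by lia.
        rewrite w_eq by auto.
        unfold isbad in Eb. apply Nat.ltb_lt in Eb.
        pose proof (bad_bound d _ m Hd0 Hl Eb).
        assert (E : Rpower (INR (load n s t)) d = INR (load n s t) * Rpower (INR (load n s t)) (d-1)).
        { pose proof (INR_pos1 _ Hl). rewrite <- (Rpower_1 (INR (load n s t))) at 2 by auto.
          rewrite <- Rpower_plus. f_equal. ring. }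
        pose proof (le_INR _ _ Hcl). pose proof (Rpower_pos (INR (load n s t)) (d-1)). nra. }
      rewrite sumR_if_const.
      pose proof (count_bound d T n r dl s sopt u m Hd1 HN HA) as Hc. apply le_INR in Hc.
      rewrite plus_INR, mult_INR in Hc. simpl INR in Hc.
      rewrite half_split by auto. fold q.
      pose proof (sqrt_nat_le m).
      pose proof (sqrt_sqrt (INR m) (pos_INR m)).
      assert (1 <= sqrt (INR m)).
      { rewrite <- sqrt_1. apply sqrt_le_1_alt. apply (le_INR 1); auto. }
      pose proof (pos_INR (Nat.sqrt m)).
      pose proof (pos_INR (length (filter (fun t => isbad n s m t && ishost n s sopt u t) (seq 1 T)))).
      set (x := sqrt (INR m)) in *. set (c := INR (length _)) in *. set (k := INR (Nat.sqrt m)) in *.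
      assert (c * x <= 3 * INR m) by nra.
      nra. }
    lra.
Qed.

Theorem lemma1 (d : R) (hd0 : 0 < d) (hd1 : d < 1) :
  exists K : R, 0 < K /\
    forall (T n : nat) (r dl : nat -> nat) (s sopt : nat -> nat),
      valid_game T n r dl ->
      nash_eq d n r dl s ->
      optimal d T n r dl sopt ->
      total_cost d T n s <= K * Rpower (INR n) ((1 - d) / 2) * total_cost d T n sopt.
Proof.
  exists 4. split; [lra|]. intros T n r dl s sopt HV HN [HA _].
  set (w := fun j => cost d (load n s (s j)) / INR (load n s (s j))).
  assert (S1 : total_cost d T n s = sumR w (seq 0 n)).
  { rewrite (regroup w s (seq 0 n) (seq 1 T)); [| apply seq_NoDup |].
    2:{ intros j Hj. apply in_seq in Hj. apply (slot_in T n r dl s); auto; [apply HN|lia]. }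
    unfold total_cost. change (fold_right Rplus 0 (map (fun t => cost d (load n s t)) (seq 1 T)))
      with (sumR (fun t => cost d (load n s t)) (seq 1 T)).
    apply sumR_ext. intros t Ht.
    rewrite (sumR_ext _ (fun j => if (s j =? t)%nat then cost d (load n s t) / INR (load n s t) else 0)).
    2:{ intros j Hj. unfold w. destruct (Nat.eqb_spec (s j) t); [subst; reflexivity|reflexivity]. }
    rewrite sumR_if_const. change (length (filter (fun j => (s j =? t)%nat) (seq 0 n))) with (load n s t).
    destruct (load n s t) eqn:E. simpl; lra.
    field. apply not_0_INR; lia. }
  rewrite S1.
  rewrite (regroup w sopt (seq 0 n) (seq 1 T)); [| apply seq_NoDup |].
  2:{ intros j Hj. apply in_seq in Hj. apply (slot_in T n r dl sopt); auto; lia. }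
  apply Rle_trans with (sumR (fun u => 4 * INR (load n sopt u) * Rpower (INR (load n sopt u)) ((d-1)/2)) (seq 1 T)).
  { apply sumR_le. intros u Hu. apply (per_u d T n r dl s sopt u); auto. }
  unfold total_cost. change (fold_right Rplus 0 (map (fun t => cost d (load n sopt t)) (seq 1 T)))
      with (sumR (fun t => cost d (load n sopt t)) (seq 1 T)).
  rewrite <- sumR_mult_l. apply sumR_le. intros u Hu.
  pose proof (Rpower_pos (INR n) ((1-d)/2)).
  destruct (Nat.eq_dec (load n sopt u) 0) as [E|E].
  { rewrite E. simpl. lra. }
  assert (Hm : (1 <= load n sopt u)%nat) by lia.
  rewrite Rmult_assoc, full_split by auto. rewrite cost_S by auto.
  assert (Rpower (INR (load n sopt u)) ((1-d)/2) <= Rpower (INR n) ((1-d)/2)).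
  { apply Rle_Rpower_l. lra. split. apply INR_pos1; auto. apply le_INR, load_le. }
  pose proof (Rpower_pos (INR (load n sopt u)) d). nra.
Qed.
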